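(* Let $\mathbb{X},\mathbb{Y}$ be finite-dimensional Banach spaces with $\dim\mathbb{X}=n$, $\dim\mathbb{Y}=m$. Let $T\in\mathbb{L}(\mathbb{X},\mathbb{Y})$, $\|T\|=1$, be an operator of rank $1$ such that $T(M_T)=\{\lambda y:|\lambda|=1\}$ for some unit vector $y\in\mathbb{Y}$. If $\dim\operatorname{span}(M_T)=n$ and $y$ is $m$-smooth, then $T$ is an extreme contraction.
   Context: $M_T=\{x\in\mathbb{X}:\|x\|=1,\|Tx\|=\|T\|\}$. For a unit vector $z$ of a normed space $\mathbb{Z}$, $J(z)=\{f\in\mathbb{Z}^*:\|f\|=1,f(z)=1\}$, and $z$ is $k$-smooth if $\dim\operatorname{span}J(z)=k$. An operator $T$ is an extreme contraction if it is an extreme point of the closed unit ball of $\mathbb{L}(\mathbb{X},\mathbb{Y})$ (operator norm). *)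

(* Defs.v *)
From HB Require Import structures.
From mathcomp Require Import all_boot all_order all_algebra.
From mathcomp Require Import boolp classical_sets reals.
Set Implicit Arguments. Unset Strict Implicit. Unset Printing Implicit Defensive.
Import Order.TTheory GRing.Theory Num.Theory.
Local Open Scope ring_scope.
Local Open Scope classical_set_scope.

(* A finite-dimensional real normed space of dimension n is modelled as
   R^n = 'rV[R]_n equipped with an arbitrary norm N. *)
Definition is_norm (R : realType) (n : nat) (N : 'rV[R]_n -> R) : Prop :=
  [/\ forall x, N x = 0 -> x = 0,
      forall (a : R) x, N (a *: x) = `|a| * N x
    & forall x y, N (x + y) <= N x + N y].

(* Linear operators X -> Y are n x m matrices acting on row vectors: x |-> x *m T. *)
Definition opnorm (R : realType) (n m : nat) (NX : 'rV[R]_n -> R)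
  (NY : 'rV[R]_m -> R) (T : 'M[R]_(n, m)) : R :=
  sup [set r | exists x, NX x = 1 /\ r = NY (x *m T)].

Definition M_T (R : realType) (n m : nat) (NX : 'rV[R]_n -> R)
  (NY : 'rV[R]_m -> R) (T : 'M[R]_(n, m)) : set 'rV[R]_n :=
  [set x | NX x = 1 /\ NY (x *m T) = opnorm NX NY T].

(* Linear functionals on Y are column vectors f : y |-> (y *m f) 0 0;
   their (dual) norm. *)
Definition fun_app (R : realType) (m : nat) (f : 'cV[R]_m) (y : 'rV[R]_m) : R :=
  (y *m f) 0 0.

Definition dualnorm (R : realType) (m : nat) (NY : 'rV[R]_m -> R)
  (f : 'cV[R]_m) : R :=
  sup [set r | exists y, NY y = 1 /\ r = `|fun_app f y|].

Definition Jset (R : realType) (m : nat) (NY : 'rV[R]_m -> R) (z : 'rV[R]_m)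
  : set 'cV[R]_m :=
  [set f | dualnorm NY f = 1 /\ fun_app f z = 1].

Definition dim_span_rV (R : realType) (d k : nat) (S : set 'rV[R]_d) : Prop :=
  exists B : 'M[R]_(k, d),
    [/\ forall i, S (row i B), row_free B & forall v, S v -> (v <= B)%MS].

Definition dim_span_cV (R : realType) (d k : nat) (S : set 'cV[R]_d) : Prop :=
  dim_span_rV k [set v : 'rV[R]_d | S v^T].

Definition k_smooth (R : realType) (m k : nat) (NY : 'rV[R]_m -> R)
  (z : 'rV[R]_m) : Prop :=
  NY z = 1 /\ dim_span_cV k (Jset NY z).

Definition extreme_contraction (R : realType) (n m : nat) (NX : 'rV[R]_n -> R)
  (NY : 'rV[R]_m -> R) (T : 'M[R]_(n, m)) : Prop :=
  opnorm NX NY T <= 1 /\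
  forall (A B : 'M[R]_(n, m)) (t : R),
    opnorm NX NY A <= 1 -> opnorm NX NY B <= 1 -> 0 < t < 1 ->
    T = t *: A + (1 - t) *: B -> A = T /\ B = T.

(* Main.v *)
Require Import Defs.
From HB Require Import structures.
From mathcomp Require Import all_boot all_order all_algebra.
From mathcomp Require Import boolp classical_sets reals.
From mathcomp Require Import topology normedtype matrix_normedtype derive.
Import Order.TTheory GRing.Theory Num.Theory numFieldNormedType.Exports.
Local Open Scope ring_scope.
Local Open Scope classical_set_scope.

Section NormFacts.
Context {R : realType} {n : nat} {N : 'rV[R]_n -> R}.
Hypothesis hN : is_norm N.

Lemma N0 : N 0 = 0.
Proof. case: hN => _ hZ _. by rewrite -(scale0r (0 : 'rV[R]_n)) hZ normr0 mul0r. Qed.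

Lemma NN x : N (- x) = N x.
Proof. case: hN => _ hZ _. by rewrite -scaleN1r hZ normrN normr1 mul1r. Qed.

Lemma N_ge0 x : 0 <= N x.
Proof.
case: hN => _ _ hD. have := hD x (- x). rewrite subrr N0 NN.
by rewrite -mulr2n -mulr_natr pmulr_lge0.
Qed.

Lemma N_sum (I : Type) (r : seq I) (P : pred I) (F : I -> 'rV[R]_n) :
  N (\sum_(i <- r | P i) F i) <= \sum_(i <- r | P i) N (F i).
Proof.
case: hN => _ _ hD.
apply: (big_ind2 (fun a b => N a <= b)); first by rewrite N0.
  by move=> a b a' b' h1 h2; apply: le_trans (hD _ _) (lerD h1 h2).
by [].
Qed.

Lemma N_dist x y : `|N x - N y| <= N (x - y).
Proof.
case: hN => _ _ hD. rewrite ler_norml; apply/andP; split.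
  rewrite lerNl opprB lerBlDr. have := hD (y - x) x.
  by rewrite subrK -opprB NN.
by rewrite lerBlDr; have := hD (x - y) y; rewrite subrK.
Qed.
End NormFacts.

Lemma coord_le_mxnorm (R : realType) n (x : 'rV[R]_n) i : `|x 0 i| <= `|x|.
Proof.
rewrite [leRHS]/Num.norm /= mx_normrE; apply/bigmax_geP; right => /=.
by exists (ord0, i) => //=; rewrite [ord0]ord1.
Qed.

Lemma mul_bound {R : realType} {n m} {N : 'rV[R]_m -> R} (hN : is_norm N)
  (x : 'rV[R]_n) (A : 'M[R]_(n, m)) :
  N (x *m A) <= `|x| * \sum_i N (row i A).
Proof.
rewrite mulmx_sum_row mulr_sumr; apply: (le_trans (N_sum hN _ _ _ _)).
apply: ler_sum => i _. case: (hN) => hN1 hZ hD; rewrite hZ.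
by rewrite ler_wpM2r ?coord_le_mxnorm // (N_ge0 hN).
Qed.

Lemma norm_lower {R : realType} {n} {N : 'rV[R]_n -> R} (hN : is_norm N) :
  exists2 c, 0 < c & forall x, c * `|x| <= N x.
Proof.
case: n N hN => [|k] N hN.
  exists 1 => // x; rewrite (thinmx0 x) normr0 mulr0; exact: N_ge0.
have hN' := hN; case: hN' => hN1 hZ hD.
set K := \sum_i N (row i (1%:M : 'M[R]_k.+1)).
have K0 : 0 <= K by apply: sumr_ge0 => i _; exact: N_ge0.
have HK z : N z <= `|z| * K by have := mul_bound hN z 1%:M; rewrite mulmx1.
have cont : continuous N.
  move=> x; apply/(@cvgrPdist_lt _ _ _ _ (nbhs_filter x)) => e e0. apply/(@nbhs_normP R _ (x : 'rV[R]_k.+1)).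
  have K1 : 0 < K + 1 by rewrite ltr_wpDl.
  exists (e / (K + 1)); first by rewrite /= divr_gt0.
  move=> t /= hxt; apply: le_lt_trans (N_dist hN x t) _.
  apply: le_lt_trans (HK _) _.
  apply: le_lt_trans (_ : `|x - t| * K <= `|x - t| * (K + 1)) _.
    by rewrite ler_wpM2l // lerDl.
  by rewrite -ltr_pdivlMr.
pose S := [set x : 'rV[R]_k.+1 | `|x| = 1].
have cS : closed S.
  rewrite (_ : S = Num.norm @^-1` [set (1:R)]) //.
  apply: preimage_closed; [move=> ? _; exact: norm_continuous | exact: closed_eq].
have bS : bounded_set S.
  rewrite /= /bounded_near; near=> M => x /= ->.
  near: M; exact: nbhs_pinfty_ge.
pose v := const_mx 1 : 'rV[R]_k.+1.
have v0 : v != 0 by apply/negP => /eqP/matrixP/(_ 0 0); rewrite !mxE => /eqP; rewrite oner_eq0.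
have S0 : S !=set0.
  exists (`|v|^-1 *: v); rewrite /S /= normrZ normfV normr_id mulVf //.
  by rewrite normr_eq0.
have [c Sc cmin] := compact_EVT_min S0 (bounded_closed_compact bS cS)
  (continuous_subspaceT cont).
move: Sc; rewrite inE /S /= => Sc.
exists (N c).
  rewrite lt_neqAle N_ge0 // andbT eq_sym; apply/negP => /eqP/hN1 c0.
  by move: Sc; rewrite c0 normr0 => /eqP; rewrite eq_sym oner_eq0.
move=> x; have [->|x0] := eqVneq x 0; first by rewrite normr0 mulr0 N_ge0.
have nx0 : 0 < `|x| by rewrite normr_gt0.
have xS : `|x|^-1 *: x \in S.
  by rewrite inE /S /= normrZ normfV normr_id mulVf // normr_eq0.
have := cmin _ xS; rewrite hZ normfV normr_id => H.
by rewrite mulrC -ler_pdivlMl.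
Unshelve. all: by end_near. Qed.

Lemma fun_appD (R : realType) m (f : 'cV[R]_m) u v :
  fun_app f (u + v) = fun_app f u + fun_app f v.
Proof. by rewrite /fun_app mulmxDl mxE. Qed.

Lemma fun_appZ (R : realType) m (f : 'cV[R]_m) (a : R) u :
  fun_app f (a *: u) = a * fun_app f u.
Proof. by rewrite /fun_app -scalemxAl mxE. Qed.

Lemma op_bound {R : realType} {n m} {NX : 'rV[R]_n -> R} {NY : 'rV[R]_m -> R}
  (hNX : is_norm NX) (hNY : is_norm NY) (A : 'M[R]_(n, m)) x :
  NX x = 1 -> NY (x *m A) <= opnorm NX NY A.
Proof.
move=> hx; apply: sup_upper_bound; last by exists x.
split; first by exists (NY (x *m A)); exists x.
have [c c0 hc] := norm_lower hNX.
set KA := \sum_i NY (row i A).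
have KA0 : 0 <= KA by apply: sumr_ge0 => i _; exact: N_ge0.
exists (c^-1 * KA) => r [z [hz ->]].
apply: le_trans (mul_bound hNY z A) _; apply: ler_wpM2r => //.
by rewrite -[c^-1]mulr1 ler_pdivlMl // -hz hc.
Qed.

Lemma dual_bound {R : realType} {m} {NY : 'rV[R]_m -> R} (hNY : is_norm NY)
  {f : 'cV[R]_m} : dualnorm NY f = 1 -> forall z, `|fun_app f z| <= NY z.
Proof.
move=> hf z; have [->|z0] := eqVneq z 0.
  by rewrite /fun_app mul0mx mxE normr0 (N0 hNY).
have hN' := hNY; case: hN' => hN1 hZ hD.
have nz : 0 < NY z.
  by rewrite lt_neqAle N_ge0 // andbT eq_sym; apply/negP => /eqP/hN1; apply/eqP.
have u1 : NY ((NY z)^-1 *: z) = 1 by rewrite hZ normfV gtr0_norm // mulVf // gt_eqF.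
have [c c0 hc] := norm_lower hNY.
set Kf := \sum_j `|f j 0|.
have Kf0 : 0 <= Kf by apply: sumr_ge0.
have : `|fun_app f ((NY z)^-1 *: z)| <= 1.
  rewrite -hf; apply: sup_upper_bound; last by exists ((NY z)^-1 *: z).
  split; first by exists `|fun_app f ((NY z)^-1 *: z)|; exists ((NY z)^-1 *: z).
  exists (c^-1 * Kf) => r [w [hw ->]].
  have hw' : `|w| <= c^-1 by rewrite -[c^-1]mulr1 ler_pdivlMl // -hw hc.
  rewrite /fun_app mxE; apply: le_trans (ler_norm_sum _ _ _) _.
  rewrite /Kf mulr_sumr; apply: ler_sum => j _; rewrite normrM.
  apply: ler_wpM2r => //; apply: le_trans hw'; exact: coord_le_mxnorm.
by rewrite fun_appZ normrM normfV (gtr0_norm nz) ler_pdivrMl // mulr1.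
Qed.

Lemma entry_mul (R : realType) a b c (M : 'M[R]_(a, b)) (P : 'M[R]_(b, c)) i k :
  (M *m P) i k = (row i M *m col k P) 0 0.
Proof. by rewrite !mxE; apply: eq_bigr => j _; rewrite !mxE. Qed.

Theorem mainTheorem5 (R : realType) (n m : nat)
  (NX : 'rV[R]_n -> R) (NY : 'rV[R]_m -> R)
  (hNX : is_norm NX) (hNY : is_norm NY)
  (T : 'M[R]_(n, m)) (y : 'rV[R]_m) :
  opnorm NX NY T = 1 ->
  \rank T = 1%N ->
  NY y = 1 ->
  [set x *m T | x in M_T NX NY T] = [set lam *: y | lam in [set lam : R | `|lam| = 1]] ->
  dim_span_rV n (M_T NX NY T) ->
  k_smooth m NY y ->
  extreme_contraction NX NY T.
Proof.
move=> hT1 _ _ hImg [Bx [BxM BxF _]] [_ [Fm [FmJ FmF _]]].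
have key : forall (A B : 'M[R]_(n, m)) (t : R),
    opnorm NX NY A <= 1 -> opnorm NX NY B <= 1 -> 0 < t < 1 ->
    T = t *: A + (1 - t) *: B -> A = T.
  move=> A B t hA hB /andP[t0 t1] hT.
  have pt i k : fun_app (row k Fm)^T (row i Bx *m A) =
                fun_app (row k Fm)^T (row i Bx *m T).
    have [hx _] := BxM i.
    have : [set x *m T | x in M_T NX NY T] (row i Bx *m T) by exists (row i Bx).
    rewrite hImg => -[lam /= hlam hxy].
    have [hf1 hfy] := FmJ k.
    have fT : fun_app (row k Fm)^T (row i Bx *m T) = lam.
      by rewrite -hxy fun_appZ hfy mulr1.
    rewrite fT.
    set a := fun_app (row k Fm)^T (row i Bx *m A).
    set b := fun_app (row k Fm)^T (row i Bx *m B).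
    have ha : `|a| <= 1.
      apply: (le_trans (dual_bound hNY hf1 _)).
      exact: (le_trans (op_bound hNX hNY A _ hx) hA).
    have hb : `|b| <= 1.
      apply: (le_trans (dual_bound hNY hf1 _)).
      exact: (le_trans (op_bound hNX hNY B _ hx) hB).
    have hl : lam = t * a + (1 - t) * b.
      by rewrite -fT hT mulmxDr -!scalemxAr fun_appD !fun_appZ.
    move: ha hb; rewrite !ler_norml => /andP[a1 a2] /andP[b1 b2].
    have : lam = 1 \/ lam = -1.
      move: hlam; case: (lerP 0 lam) => h.
        by rewrite ger0_norm // => ->; left.
      by rewrite ltr0_norm // => /eqP; rewrite eqr_oppLR => /eqP ->; right.
    case=> hl1; rewrite hl1 in hl *.
      apply/eqP; rewrite eq_le a2 /= leNgt; apply/negP => ha.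
      have : t * a + (1 - t) * b < t * 1 + (1 - t) * 1.
        apply: ltr_leD; first by rewrite ltr_pM2l.
        by rewrite ler_wpM2l // subr_ge0 ltW.
      by rewrite !mulr1 [t + _]addrC subrK -hl ltxx.
    apply/eqP; rewrite eq_le a1 andbT leNgt; apply/negP => ha.
    have : t * (-1) + (1 - t) * (-1) < t * a + (1 - t) * b.
      apply: ltr_leD; first by rewrite ltr_pM2l.
      by rewrite ler_wpM2l // subr_ge0 ltW.
    by rewrite !mulrN1 -opprD [t + _]addrC subrK -hl ltxx.
  have BxU : Bx \in unitmx by rewrite -row_free_unit.
  have FmU : Fm^T \in unitmx by rewrite unitmx_tr -row_free_unit.
  have E : Bx *m A *m Fm^T = Bx *m T *m Fm^T.
    apply/matrixP => i k; rewrite (@entry_mul _ _ _ _ (Bx *m A)) (@entry_mul _ _ _ _ (Bx *m T)) !row_mul -tr_row.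
    exact: pt.
  move: E => /(congr1 (mulmx^~ (invmx Fm^T))); rewrite !mulmxK //.
  by move/(congr1 (mulmx (invmx Bx))); rewrite !mulKmx.
split; first by rewrite hT1.
move=> A B t hA hB ht hT; split; first exact: (key A B t).
apply: (key B A (1 - t)) => //.
  by case/andP: ht => t0 t1; rewrite subr_gt0 t1 /= ltrBlDr ltrDl.
by rewrite subKr addrC.
Qed.
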